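(* Let $T$ be an $\mathcal O$-operator on a Lie algebra $\mathfrak g$ with respect to a representation $(V;\rho)$ and let $x\in\mathfrak g$ be a Nijenhuis element associated to $T$. Then $\rho(x)$ is a Nijenhuis operator on the pre-Lie algebra $(V,\cdot_T)$.
   Context: An $\mathcal O$-operator: linear $T:V\to\mathfrak g$ with $[Tu,Tv]=T(\rho(Tu)(v)-\rho(Tv)(u))$; it induces the pre-Lie product $u\cdot_Tv=\rho(Tu)(v)$ on $V$. An element $x\in\mathfrak g$ is a Nijenhuis element associated to $T$ if $[[x,y],[x,z]]=0$ for all $y,z\in\mathfrak g$, $\rho([x,y])\rho(x)=0$ for all $y\in\mathfrak g$, and $[x,[Tu,x]+T\rho(x)(u)]=0$ for all $u\in V$. A Nijenhuis operator on a pre-Lie algebra $(V,\cdot)$ is a linear $N:V\to V$ with $(Nu)\cdot(Nv)=N((Nu)\cdot v+u\cdot(Nv)-N(u\cdot v))$ for all $u,v\in V$. *)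

(* Defs.v *)
From HB Require Import structures.
From mathcomp Require Import all_boot all_order all_algebra.
Set Implicit Arguments. Unset Strict Implicit. Unset Printing Implicit Defensive.
Import GRing.Theory.
Local Open Scope ring_scope.

Record is_lie_algebra (K : fieldType) (g : lmodType K) (br : g -> g -> g) : Prop := {
  lie_linl : forall z, linear (fun x => br x z);
  lie_linr : forall x, linear (br x);
  lie_alt : forall x, br x x = 0;
  lie_jacobi : forall x y z, br x (br y z) + br y (br z x) + br z (br x y) = 0
}.

Record is_representation (K : fieldType) (g V : lmodType K)
    (br : g -> g -> g) (rho : g -> V -> V) : Prop := {
  rep_lin : forall (a : K) (x y : g) (v : V), rho (a *: x + y) v = a *: rho x v + rho y v;
  rep_linV : forall x, linear (rho x);
  rep_hom : forall x y v, rho (br x y) v = rho x (rho y v) - rho y (rho x v)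
}.

Definition is_O_operator (K : fieldType) (g V : lmodType K)
    (br : g -> g -> g) (rho : g -> V -> V) (T : V -> g) : Prop :=
  linear T /\
  forall u v, br (T u) (T v) = T (rho (T u) v - rho (T v) u).

Definition preLie_T (K : fieldType) (g V : lmodType K)
    (rho : g -> V -> V) (T : V -> g) (u v : V) : V := rho (T u) v.

Definition is_Nijenhuis_element (K : fieldType) (g V : lmodType K)
    (br : g -> g -> g) (rho : g -> V -> V) (T : V -> g) (x : g) : Prop :=
  (forall y z, br (br x y) (br x z) = 0) /\
  (forall y (v : V), rho (br x y) (rho x v) = 0) /\
  (forall u, br x (br (T u) x + T (rho x u)) = 0).

Definition is_Nijenhuis_operator (K : fieldType) (V : lmodType K)
    (mul : V -> V -> V) (N : V -> V) : Prop :=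
  linear N /\
  forall u v, mul (N u) (N v) = N (mul (N u) v + mul u (N v) - N (mul u v)).

(* Main.v *)
Require Import Defs.
From mathcomp Require Import all_boot all_order all_algebra.
Import GRing.Theory.
Local Open Scope ring_scope.

Lemma lin_add {K : fieldType} {V W : lmodType K} {f : V -> W} :
  linear f -> forall u v, f (u + v) = f u + f v.
Proof. move=> Hf u v; have := Hf 1 u v; by rewrite !scale1r. Qed.

Lemma lin_0 {K : fieldType} {V W : lmodType K} {f : V -> W} :
  linear f -> f 0 = 0.
Proof.
move=> Hf; have := lin_add Hf 0 0; rewrite addr0 => H.
by apply: (@addrI _ (f 0)); rewrite addr0 -H.
Qed.

Lemma lin_opp {K : fieldType} {V W : lmodType K} {f : V -> W} :
  linear f -> forall u, f (- u) = - f u.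
Proof.
move=> Hf u; apply/eqP; rewrite -subr_eq0 opprK -lin_add // addNr lin_0 //.
Qed.

Lemma lin_sub {K : fieldType} {V W : lmodType K} {f : V -> W} :
  linear f -> forall u v, f (u - v) = f u - f v.
Proof. by move=> Hf u v; rewrite lin_add // lin_opp. Qed.

Theorem proposition4p11 (K : fieldType) (g V : lmodType K)
    (br : g -> g -> g) (rho : g -> V -> V) (T : V -> g) (x : g) :
  is_lie_algebra br ->
  is_representation br rho ->
  is_O_operator br rho T ->
  is_Nijenhuis_element br rho T x ->
  is_Nijenhuis_operator (preLie_T rho T) (rho x).
Proof.
move=> _ [rl rlV rh] _ [_ [H2 H3]].
have LN := rlV x.
split => // u v; rewrite /preLie_T.
have radd : forall y z w, rho (y + z) w = rho y w + rho z w.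
  by move=> y z w; have := rl 1 y z w; rewrite !scale1r.
have := H3 u; move: (T (rho x u)) => a H3'.
have E3 : rho (br x (br (T u) x + a)) v = 0.
  rewrite H3'; have := radd 0 0 v; rewrite addr0 => H.
  by apply: (@addrI _ (rho 0 v)); rewrite addr0 -H.
have E2 := H2 (T u) v.
rewrite !rh !radd !rh !(lin_add LN) ?(lin_opp LN) in E3.
rewrite !rh in E2.
move/eqP: E2; rewrite subr_eq0 => /eqP E2.
rewrite E2 in E3.
move/eqP: E3; rewrite subr_eq0 => /eqP E3.
rewrite subrr add0r in E3.
rewrite -E3 (lin_sub LN) (lin_add LN) E2.
by rewrite addrC addrA.
Qed.
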